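(* Let $w \in S_n$. Suppose that $\mathfrak{S}_w$ is a single standard elementary monomial $e_{(a_1,\dots,a_n)} = \prod_i e^i_{a_i}$. Then for each $1 \le i \le n-1$, $a_i = 0$ if and only if $i$ is an ascent of $w$. Furthermore, if $i$ is a descent of $w$ and $i-1$ is an ascent of $w$, then $\partial_i(\mathfrak{S}_w) = \mathfrak{S}_{ws_i}$ is also a single standard elementary monomial. Similarly, suppose that $\mathfrak{S}_w$ is a single complete homogeneous monomial $h_{(a_1,\dots,a_n)} = \prod_i h^i_{a_i}$. Then $a_i = 0$ if and only if $i$ is an ascent of $w$; and if $i$ is a descent of $w$ and $i+1$ is an ascent of $w$, then $\partial_i(\mathfrak{S}_w) = \mathfrak{S}_{ws_i}$ is also a single complete homogeneous monomial.
   Context: $e^i_j$ (resp. $h^i_j$) is the elementary (resp. complete homogeneous) symmetric polynomial of degree $j$ in $x_1,\dots,x_i$. The divided difference operator is $\partial_i f = (f - s_i f)/(x_i - x_{i+1})$ where $s_i$ swaps $x_i$ and $x_{i+1}$. Schubert polynomials: $\mathfrak{S}_{w_0} = x_1^{n-1}\cdots x_{n-1}$ for the longest $w_0\in S_n$, and $\partial_i\mathfrak{S}_w = \mathfrak{S}_{ws_i}$ if $\ell(ws_i) = \ell(w)-1$, $0$ otherwise. A position $i$ is a descent of $w$ if $w(i+1) < w(i)$ and an ascent if $w(i+1) > w(i)$. *)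

(* Defs.v *)
From HB Require Import structures.
From mathcomp Require Import all_boot all_order all_algebra all_fingroup.
From mathcomp Require Import mpoly.
From Stdlib Require Import ClassicalEpsilon.

Set Implicit Arguments.
Unset Strict Implicit.
Unset Printing Implicit Defensive.

Import GRing.Theory.
Local Open Scope ring_scope.

Section Schubert.
Variable n : nat.

(* Conventions: the paper's variables x_1..x_n are 'X_k (k : 'I_n), with
   x_{k+1} = 'X_k.  Paper positions i (1 <= i <= n) are 1-based nats and
   position i corresponds to the ordinal i-1. *)

(* the simple transposition s_i (swapping positions i and i+1, 1-based);
   only used for 1 <= i <= n-1 (identity otherwise) *)
Definition simple_tr (i : nat) : 'S_n :=
  match insub i.-1, insub i with
  | Some a, Some b => tperm a b
  | _, _ => 1%g
  end.

Definition xdiff (i : nat) : {mpoly int[n]} :=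
  match insub i.-1, insub i with
  | Some a, Some b => 'X_a - 'X_b
  | _, _ => 0
  end.

Definition swapvar (i : nat) (f : {mpoly int[n]}) : {mpoly int[n]} :=
  msym (simple_tr i) f.

(* divided difference: the (unique) g with (x_i - x_{i+1}) g = f - s_i f *)
Definition ddiff (i : nat) (f : {mpoly int[n]}) : {mpoly int[n]} :=
  epsilon (inhabits 0) (fun g => xdiff i * g = f - swapvar i f).

(* w s_i : with mathcomp's convention (s * t) x = t (s x), the permutation
   x |-> w (s_i x) is (s_i * w). *)
Definition mul_si (w : 'S_n) (i : nat) : 'S_n := (simple_tr i * w)%g.

Definition perm_len (w : 'S_n) : nat :=
  #|[set p : 'I_n * 'I_n | (p.1 < p.2)%N && (w p.2 < w p.1)%N]|.

Definition w0 : 'S_n := perm (@rev_ord_inj n).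

Definition xdelta : {mpoly int[n]} := \prod_(k < n) 'X_k ^+ (n.-1 - k).

(* Schubert polynomials, characterised as in the paper's context:
   S_{w0} = x^delta and, for 1 <= i <= n-1,
   d_i S_w = S_{w s_i} if l(w s_i) = l(w) - 1, and 0 otherwise. *)
Definition is_schubert (S : 'S_n -> {mpoly int[n]}) : Prop :=
  S w0 = xdelta /\
  forall (w : 'S_n) (i : nat), (1 <= i <= n.-1)%N ->
    ddiff i (S w) =
      if (perm_len (mul_si w i)).+1 == perm_len w then S (mul_si w i) else 0.

(* the value w(i) as a 1-based nat, extended by w(0) = 0, w(i) = i for i > n *)
Definition pval (w : 'S_n) (i : nat) : nat :=
  if i == 0%N then 0%N else
  match insub i.-1 with
  | Some k => (nat_of_ord (w k)).+1
  | None => i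
  end.

Definition is_ascent (w : 'S_n) (i : nat) : bool := (pval w i < pval w i.+1)%N.
Definition is_descent (w : 'S_n) (i : nat) : bool := (pval w i.+1 < pval w i)%N.

Definition esym (i j : nat) : {mpoly int[n]} :=
  \sum_(A : {set 'I_n} | (A \subset [set k : 'I_n | (k < i)%N]) && (#|A| == j))
     \prod_(k in A) 'X_k.

Definition hsym (i j : nat) : {mpoly int[n]} :=
  \sum_(m : 'X_{1..n < j.+1} |
          (mdeg m == j) && [forall k : 'I_n, (i <= k)%N ==> (m k == 0%N)])
     'X_[m].

Definition emono (a : nat -> nat) : {mpoly int[n]} :=
  \prod_(1 <= i < n.+1) esym i (a i).
Definition hmono (a : nat -> nat) : {mpoly int[n]} :=
  \prod_(1 <= i < n.+1) hsym i (a i).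

Definition std_e (a : nat -> nat) : Prop := forall i, (1 <= i <= n)%N -> (a i <= i)%N.

End Schubert.

(* Main.v *)
Require Import Defs.
From HB Require Import structures.
From mathcomp Require Import all_boot all_order all_algebra all_fingroup.
From mathcomp Require Import mpoly.
From mathcomp Require Import zify ring.
From Stdlib Require Import ClassicalEpsilon.
Require Import Defs.

Set Implicit Arguments.
Unset Strict Implicit.
Unset Printing Implicit Defensive.
Import GRing.Theory.
Local Open Scope ring_scope.

Ltac ifs := repeat (match goal with |- context [if ?b then _ else _] =>
  lazymatch b with context [if _ then _ else _] => fail | _ =>
  let h := fresh "h" in case: (boolP b) => h end end); try lia.

Section Aux.
Variable n : nat.
Local Notation P := {mpoly int[n]}.

Lemma mcoeffMXU (p : P) (a : 'I_n) m :
  (p * 'X_a)@_m = if (0 < m a)%N then p@_(m - U_(a))%MM else 0.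
Proof.
case: ifP => h.
  have E : m = (U_(a) + (m - U_(a)))%MM.
    by apply/mnmP => j; rewrite mnmDE mnmBE mnm1E; case: eqP => [<-|]; lia.
  by rewrite {1}E mcoeffMX.
apply: memN_msupp_eq0; rewrite (perm_mem (msuppMX p U_(a))).
apply/mapP => -[m' _ E]; move: h; rewrite E mnmDE mnm1E eqxx; lia.
Qed.

Lemma mcoeffXUM (p : P) (a : 'I_n) m :
  ('X_a * p)@_m = if (0 < m a)%N then p@_(m - U_(a))%MM else 0.
Proof. by rewrite mulrC mcoeffMXU. Qed.

Definition mset (A : {set 'I_n}) : 'X_{1..n} := [multinom (nat_of_bool (p \in A)) | p < n].

Lemma prodX_mset (A : {set 'I_n}) : \prod_(p in A) ('X_p : P) = 'X_[mset A].
Proof.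
rewrite (mpolyXE_id int (mset A)) big_mkcond /=. apply: congr_big => // p _.
by rewrite mnmE; case: (p \in A); rewrite ?expr1 ?expr0.
Qed.

Lemma mdeg_mset A : mdeg (mset A) = #|A|.
Proof.
rewrite mdegE -sum1_card [RHS]big_mkcond /=; apply: eq_bigr => p _.
by rewrite mnmE; case: (p \in A).
Qed.

Definition echar (j k : nat) (m : 'X_{1..n}) : bool :=
  [forall p : 'I_n, (m p <= 1)%N && ((j <= p)%N ==> (m p == 0%N))] && (mdeg m == k).

Lemma esym_coef j k m : (Defs.esym n j k)@_m = (echar j k m)%:R.
Proof.
rewrite /esym raddf_sum /=.
under eq_bigr do rewrite prodX_mset mcoeffX.
case: (boolP (echar j k m)) => hm.
  pose A0 := [set p | m p == 1%N].
  move: hm => /andP [/forallP hm /eqP hd].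
  have eA : mset A0 = m.
    apply/mnmP => p; rewrite mnmE inE; have := hm p; case: eqP => //= ?; lia.
  have cA : (A0 \subset [set k0 : 'I_n | (k0 < j)%N]) && (#|A0| == k).
    apply/andP; split.
      apply/subsetP => p; rewrite !inE => /eqP e; have := hm p; rewrite e /=.
      by case: leqP.
    by rewrite -mdeg_mset eA hd.
  rewrite (bigD1 A0) // big1 ?addr0 ?eA ?eqxx // => B /andP [_ nB].
  case: eqP => // eB; case/eqP: nB; apply/setP => p.
  move/mnmP: eB => /(_ p); rewrite -eA !mnmE; do 2 case: (_ \in _) => //.
rewrite big1 // => B /andP [/subsetP sB /eqP cB]; case: eqP => // eB.
case/negP: hm; rewrite -eB; apply/andP; split; last by rewrite mdeg_mset cB.
apply/forallP => p; rewrite mnmE; case: (boolP (p \in B)) => hp /=.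
  by have := sB _ hp; rewrite inE => h; apply/implyP; lia.
by apply/implyP.
Qed.

Definition hchar (j k : nat) (m : 'X_{1..n}) : bool :=
  (mdeg m == k) && [forall p : 'I_n, (j <= p)%N ==> (m p == 0%N)].

Lemma hsym_coef j k m : (hsym n j k)@_m = (hchar j k m)%:R.
Proof.
rewrite /hsym raddf_sum /=.
under eq_bigr do rewrite mcoeffX.
case: (boolP (hchar j k m)) => hm.
  move: (hm) => /andP [/eqP hd hf].
  have hb : (mdeg m < k.+1)%N by rewrite hd.
  pose bm : 'X_{1..n < k.+1} := BMultinom hb.
  rewrite (bigD1 bm) /=; last by rewrite hd eqxx hf.
  rewrite eqxx big1 ?addr0 // => c /andP [_ nc]; case: eqP => // e.
  by case/eqP: nc; apply: val_inj.
rewrite big1 // => c /andP [hd hf]; case: eqP => // e.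
by case/negP: hm; rewrite -e /hchar hd hf.
Qed.


Lemma echar_perm (s : 'S_n) j k (m : 'X_{1..n}) : (forall p, (j <= s p)%N = (j <= p)%N) ->
  echar j k [multinom m (s i) | i < n] = echar j k m.
Proof.
move=> hs; rewrite /echar mdeg_mperm; congr (_ && _).
apply/forallP/forallP => H p.
  by have := H (s^-1 p)%g; rewrite mnmE permKV -(hs (s^-1 p)%g) permKV.
by have := H (s p); rewrite mnmE hs.
Qed.

Lemma hchar_perm (s : 'S_n) j k (m : 'X_{1..n}) : (forall p, (j <= s p)%N = (j <= p)%N) ->
  hchar j k [multinom m (s i) | i < n] = hchar j k m.
Proof.
move=> hs; rewrite /hchar mdeg_mperm; congr (_ && _).
apply/forallP/forallP => H p.
  by have := H (s^-1 p)%g; rewrite mnmE permKV -(hs (s^-1 p)%g) permKV.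
by have := H (s p); rewrite mnmE hs.
Qed.

Lemma esym_sym (s : 'S_n) j k : (forall p, (j <= s p)%N = (j <= p)%N) ->
  msym s (Defs.esym n j k) = Defs.esym n j k.
Proof. by move=> hs; apply/mpolyP => m; rewrite mcoeff_sym !esym_coef echar_perm. Qed.

Lemma hsym_sym (s : 'S_n) j k : (forall p, (j <= s p)%N = (j <= p)%N) ->
  msym s (hsym n j k) = hsym n j k.
Proof. by move=> hs; apply/mpolyP => m; rewrite mcoeff_sym !hsym_coef hchar_perm. Qed.

Lemma tperm_le (a b : 'I_n) j : (b : nat) = (a : nat).+1 -> j != (b : nat) ->
  forall p, (j <= tperm a b p)%N = (j <= p)%N.
Proof.
move=> hab /eqP hj p; case: tpermP => [->|->|//]; rewrite hab.
  by apply/idP/idP; move: hj; rewrite hab; lia.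
by apply/idP/idP; move: hj; rewrite hab; lia.
Qed.

Lemma si_spec i : (0 < i < n)%N -> exists a b : 'I_n,
  [/\ (a : nat) = i.-1, (b : nat) = i, simple_tr n i = tperm a b & xdiff n i = 'X_a - 'X_b].
Proof.
move=> /andP [h0 h1]; rewrite /simple_tr /xdiff.
case: insubP => [a _ ea|]; last by lia.
case: insubP => [b _ eb|]; last by lia.
by exists a, b.
Qed.

Lemma divXY (x y : P) p q : exists g, (x - y) * g = x ^+ p * y ^+ q - x ^+ q * y ^+ p.
Proof.
wlog le : p q / (q <= p)%N.
  move=> H; case: (leqP q p) => h; first exact: H.
  have [g hg] := H q p (ltnW h); exists (- g).
  by rewrite mulrN hg opprB.
have -> : p = (q + (p - q))%N by lia.
set d := (p - q)%N.
exists ((x * y) ^+ q * \sum_(i < d) x ^+ (d.-1 - i) * y ^+ i).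
rewrite mulrCA -subrXX !exprD exprMn; ring.
Qed.

Lemma div_mono (a b : 'I_n) (m : 'X_{1..n}) : a != b ->
  exists g : P, ('X_a - 'X_b) * g = 'X_[m] - msym (tperm a b) 'X_[m].
Proof.
move=> /negbTE hab; have hba : (b == a) = false by rewrite eq_sym.
rewrite msymX tpermV.
pose r := [multinom (if (i == a) || (i == b) then 0%N else m i) | i < n].
have e1 : m = (r + U_(a) *+ m a + U_(b) *+ m b)%MM.
  apply/mnmP => i; rewrite !mnmDE !mulmnE !mnm1E !mnmE.
  have [->|nia] := eqVneq i a; first by rewrite ?eqxx ?hab ?hba /=; lia.
  have [->|nib] := eqVneq i b; first by rewrite ?eqxx ?hab ?hba /=; lia.
  by rewrite ?(eq_sym _ i) ?(negbTE nia) ?(negbTE nib) /=; lia.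
have e2 : [multinom m (tperm a b i) | i < n] = (r + U_(a) *+ m b + U_(b) *+ m a)%MM.
  apply/mnmP => i; rewrite !mnmDE !mulmnE !mnm1E !mnmE.
  have [->|nia] := eqVneq i a; first by rewrite tpermL ?eqxx ?hab ?hba /=; lia.
  have [->|nib] := eqVneq i b; first by rewrite tpermR ?eqxx ?hab ?hba /=; lia.
  by rewrite tpermD 1?eq_sym // ?(eq_sym _ i) ?(negbTE nia) ?(negbTE nib) /=; lia.
rewrite {1}e1 e2 !mpolyXD -!mpolyXn.
have [g hg] := divXY ('X_a : P) ('X_b) (m a) (m b).
exists ('X_[r] * g); rewrite mulrCA hg; ring.
Qed.

Lemma div_gen (a b : 'I_n) (f : P) : a != b ->
  exists g : P, ('X_a - 'X_b) * g = f - msym (tperm a b) f.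
Proof.
move=> hab.
suff H : forall (r : seq 'X_{1..n}) (c : 'X_{1..n} -> int), exists g : P,
    ('X_a - 'X_b) * g = \sum_(m <- r) c m *: 'X_[m]
                        - msym (tperm a b) (\sum_(m <- r) c m *: 'X_[m]).
  by rewrite (mpolyE f); apply: H.
move=> r c; elim: r => [|m r [g hg]].
  by exists 0; rewrite !big_nil msym0 mulr0 subr0.
have [g1 h1] := div_mono m hab.
exists (c m *: g1 + g).
rewrite big_cons msymD msymZ mulrDr -scalerAr h1 hg scalerBr.
rewrite opprD addrACA //.
Qed.

Lemma Xneq (a b : 'I_n) : a != b -> ('X_a : P) - 'X_b != 0.
Proof.
move=> /negbTE hab; rewrite subr_eq0; apply/eqP => e.
have := congr1 (mcoeff U_(a)) e; rewrite !mcoeffX eqxx.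
have -> : (U_(b) == U_(a))%MM = false.
  apply/eqP => E; move/mnmP: E => /(_ a); rewrite !mnm1E eqxx eq_sym hab //.
by [].
Qed.

Lemma ab_neq (a b : 'I_n) i : (a : nat) = i.-1 -> (b : nat) = i -> (0 < i)%N -> a != b.
Proof. by move=> ha hb h0; apply/eqP => e; move: hb; rewrite -e ha; lia. Qed.

Lemma ddiffP i (f : P) : (0 < i < n)%N -> xdiff n i * ddiff i f = f - swapvar i f.
Proof.
move=> hi; have [a [b [ha hb es ex]]] := si_spec hi.
rewrite /ddiff; apply: (epsilon_spec (inhabits 0) (fun g => xdiff n i * g = f - swapvar i f)).
rewrite /swapvar es ex; apply: div_gen.
by apply: (ab_neq ha hb); case/andP: hi.
Qed.

Lemma xdiff_neq0 i : (0 < i < n)%N -> xdiff n i != 0.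
Proof.
move=> hi; have [a [b [ha hb es ex]]] := si_spec hi.
by rewrite ex; apply: Xneq; apply: (ab_neq ha hb); case/andP: hi.
Qed.

Lemma ddiff_char i (f g : P) : (0 < i < n)%N ->
  xdiff n i * g = f - swapvar i f -> ddiff i f = g.
Proof. by move=> hi h; apply: (mulfI (xdiff_neq0 hi)); rewrite ddiffP. Qed.


Lemma ord_neq (p a : 'I_n) : p != a -> (p : nat) <> a.
Proof. by move=> /eqP h e; apply: h; apply: val_inj. Qed.

Lemma echarP j k (m : 'X_{1..n}) :
  reflect ((forall p : 'I_n, (m p <= 1)%N /\ ((j <= p)%N -> m p = 0%N)) /\ mdeg m = k)
          (echar j k m).
Proof.
apply: (iffP andP) => -[H1 H2].
  split; last exact/eqP.
  by move=> p; have /andP [h1 /implyP h2] := forallP H1 p; split => // /h2 /eqP.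
split; last exact/eqP.
apply/forallP => p; have [h1 h2] := H1 p; rewrite h1; apply/implyP => /h2 ->.
by [].
Qed.

Lemma hcharP j k (m : 'X_{1..n}) :
  reflect (mdeg m = k /\ (forall p : 'I_n, (j <= p)%N -> m p = 0%N)) (hchar j k m).
Proof.
apply: (iffP andP) => -[H1 H2].
  split; first exact/eqP.
  by move=> p hp; have /implyP /(_ hp) /eqP := forallP H2 p.
split; first exact/eqP.
by apply/forallP => p; apply/implyP => /H2 ->.
Qed.

Lemma mdeg_subU (m : 'X_{1..n}) (a : 'I_n) : (0 < m a)%N ->
  mdeg (m - U_(a))%MM = (mdeg m).-1.
Proof.
move=> h; have E : m = ((m - U_(a)) + U_(a))%MM.
  by apply/mnmP => j; rewrite mnmDE mnmBE mnm1E; case: eqP => [<-|]; lia.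
by rewrite {2}E mdegD mdeg1 addn1.
Qed.

Lemma subU_E (m : 'X_{1..n}) (a p : 'I_n) :
  (m - U_(a))%MM p = if p == a then (m p).-1 else m p.
Proof. by rewrite mnmBE mnm1E eq_sym; case: eqP => _; lia. Qed.

Lemma echar_rec0 (a : 'I_n) k (m : 'X_{1..n}) : m a = 0%N ->
  echar (a : nat).+1 k m = echar a k m.
Proof.
move=> h; apply/echarP/echarP => -[H hd]; split => // p; have := H p.
  by have [->|nap] := eqVneq p a; [rewrite h | move/ord_neq: nap => nap; lia].
lia.
Qed.

Lemma echar_recF (a : 'I_n) k (m : 'X_{1..n}) : (0 < m a)%N -> echar a k m = false.
Proof. by move=> h; apply/echarP => -[H _]; have := H a; lia. Qed.

Lemma echar_recP (a : 'I_n) k (m : 'X_{1..n}) : (0 < m a)%N -> (0 < k)%N ->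
  echar (a : nat).+1 k m = echar a k.-1 (m - U_(a))%MM.
Proof.
move=> h hk; have hm : (0 < mdeg m)%N.
  by rewrite lt0n mdeg_eq0; apply/eqP => e; move: h; rewrite e mnm0E.
apply/echarP/echarP => -[H hd].
  split; last by rewrite mdeg_subU // hd.
  move=> p; rewrite subU_E; have := H p.
  by have [->|nap] := eqVneq p a; [lia | move/ord_neq: nap => nap; lia].
split; last by move: hd hm; rewrite mdeg_subU //; lia.
move=> p; have := H p; rewrite subU_E.
by have [->|nap] := eqVneq p a; [lia | move/ord_neq: nap => nap; lia].
Qed.

Lemma hchar_rec0 (b : 'I_n) k (m : 'X_{1..n}) : m b = 0%N ->
  hchar (b : nat).+1 k m = hchar b k m.
Proof.
move=> h; apply/hcharP/hcharP => -[hd H]; split => // p hp.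
  by have [->|nap] := eqVneq p b; [rewrite h | move/ord_neq: nap => nap; apply: H; lia].
by apply: H; lia.
Qed.

Lemma hchar_recF (b : 'I_n) k (m : 'X_{1..n}) : (0 < m b)%N -> hchar b k m = false.
Proof. by move=> h; apply/hcharP => -[_ H]; have := H b (leqnn _); lia. Qed.

Lemma hchar_recP (b : 'I_n) k (m : 'X_{1..n}) : (0 < m b)%N -> (0 < k)%N ->
  hchar (b : nat).+1 k m = hchar (b : nat).+1 k.-1 (m - U_(b))%MM.
Proof.
move=> h hk; have hm : (0 < mdeg m)%N.
  by rewrite lt0n mdeg_eq0; apply/eqP => e; move: h; rewrite e mnm0E.
apply/hcharP/hcharP => -[hd H].
  split; first by rewrite mdeg_subU // hd.
  move=> p hp; rewrite subU_E; have := H p hp; move: hp.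
  by have [->|nap] := eqVneq p b; [lia | by []].
split; first by move: hd hm; rewrite mdeg_subU //; lia.
move=> p hp; have := H p hp; rewrite subU_E; move: hp.
by have [->|nap] := eqVneq p b; [lia | by []].
Qed.

Lemma esym_rec (a : 'I_n) k : (0 < k)%N ->
  Defs.esym n (a : nat).+1 k = Defs.esym n a k + 'X_a * Defs.esym n a k.-1.
Proof.
move=> hk; apply/mpolyP => m; rewrite mcoeffD mcoeffXUM !esym_coef.
case: (posnP (m a)) => h.
  by rewrite /= addr0 echar_rec0.
by rewrite echar_recF // echar_recP // add0r.
Qed.

Lemma hsym_rec (b : 'I_n) k : (0 < k)%N ->
  hsym n (b : nat).+1 k = hsym n b k + 'X_b * hsym n (b : nat).+1 k.-1.
Proof.
move=> hk; apply/mpolyP => m; rewrite mcoeffD mcoeffXUM !hsym_coef.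
case: (posnP (m b)) => h.
  by rewrite /= addr0 hchar_rec0.
by rewrite hchar_recF // hchar_recP // add0r.
Qed.

Lemma esym0 j : Defs.esym n j 0 = 1.
Proof.
apply/mpolyP => m; rewrite esym_coef mcoeff1; congr ((nat_of_bool _)%:R).
apply/echarP/eqP => [[_ /eqP]|->]; first by rewrite mdeg_eq0 => /eqP.
by split; [move=> p; rewrite mnm0E | exact: mdeg0].
Qed.

Lemma hsym0 j : hsym n j 0 = 1.
Proof.
apply/mpolyP => m; rewrite hsym_coef mcoeff1; congr ((nat_of_bool _)%:R).
apply/hcharP/eqP => [[/eqP]|->]; first by rewrite mdeg_eq0 => /eqP.
by split; [exact: mdeg0 | move=> p; rewrite mnm0E].
Qed.

Lemma msym_tpermX (a b : 'I_n) : a != b -> msym (tperm a b) ('X_a : P) = 'X_b.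
Proof.
move=> /negbTE hab; have hba : (b == a) = false by rewrite eq_sym.
rewrite msymX tpermV; congr 'X_[_]; apply/mnmP => p; rewrite !mnmE ?mnm1E.
by case: (tpermP a b p) => [->|->|/eqP hpa /eqP hpb]; rewrite ?eqxx ?hab ?hba //
   ?(eq_sym a p) ?(eq_sym b p) (negbTE hpa) (negbTE hpb).
Qed.

Lemma swap_esym_other i j k : (0 < i < n)%N -> j != i ->
  swapvar i (Defs.esym n j k) = Defs.esym n j k.
Proof.
move=> hi hj; have [a [b [ha hb es ex]]] := si_spec hi.
rewrite /swapvar es; apply: esym_sym; apply: tperm_le; first by rewrite ha hb; lia.
by rewrite hb.
Qed.

Lemma swap_hsym_other i j k : (0 < i < n)%N -> j != i ->
  swapvar i (hsym n j k) = hsym n j k.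
Proof.
move=> hi hj; have [a [b [ha hb es ex]]] := si_spec hi.
rewrite /swapvar es; apply: hsym_sym; apply: tperm_le; first by rewrite ha hb; lia.
by rewrite hb.
Qed.

Lemma esym_diff i k : (0 < i < n)%N -> (0 < k)%N ->
  Defs.esym n i k - swapvar i (Defs.esym n i k) = xdiff n i * Defs.esym n i.-1 k.-1.
Proof.
move=> hi hk; have [a [b [ha hb es ex]]] := si_spec hi.
have hab : a != b by apply: (ab_neq ha hb); case/andP: hi.
have ei : i = (a : nat).+1 by rewrite ha; lia.
have sa : forall k', swapvar i (Defs.esym n a k') = Defs.esym n a k'.
  by move=> k'; apply: swap_esym_other => //; rewrite ha; apply/eqP; lia.
have hs : forall f, swapvar i f = msym (tperm a b) f by move=> f; rewrite /swapvar es.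
have -> : Defs.esym n i k = Defs.esym n (a : nat).+1 k by rewrite ei.
have -> : i.-1 = a by rewrite ei.
rewrite ex esym_rec // !hs msymD msymM -!hs !sa hs msym_tpermX //; ring.
Qed.

Lemma hsym_diff i k : (0 < i < n)%N -> (0 < k)%N ->
  hsym n i k - swapvar i (hsym n i k) = xdiff n i * hsym n i.+1 k.-1.
Proof.
move=> hi hk; have [a [b [ha hb es ex]]] := si_spec hi.
have hab : a != b by apply: (ab_neq ha hb); case/andP: hi.
have hba : b != a by rewrite eq_sym.
have ei : i = (b : nat) by rewrite hb.
have sb : forall k', swapvar i (hsym n (b : nat).+1 k') = hsym n (b : nat).+1 k'.
  by move=> k'; apply: swap_hsym_other => //; rewrite hb; apply/eqP; lia.
have E : hsym n i k = hsym n (b : nat).+1 k - 'X_b * hsym n (b : nat).+1 k.-1.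
  by rewrite hsym_rec // -ei addrK.
have hs : forall f, swapvar i f = msym (tperm a b) f by move=> f; rewrite /swapvar es.
rewrite E !hs msymB msymM -!hs !sb hs tpermC msym_tpermX // ex ei; ring.
Qed.

Lemma ddiff_symM i (p q : P) : (0 < i < n)%N -> swapvar i p = p ->
  ddiff i (p * q) = p * ddiff i q.
Proof.
move=> hi hp; apply: ddiff_char => //.
by rewrite mulrCA ddiffP // /swapvar msymM -/(swapvar i p) hp mulrBr.
Qed.

Lemma ddiff_sym i (p : P) : (0 < i < n)%N -> swapvar i p = p -> ddiff i p = 0.
Proof. by move=> hi hp; apply: ddiff_char => //; rewrite hp subrr mulr0. Qed.

Lemma ddiff_esym i k : (0 < i < n)%N ->
  ddiff i (Defs.esym n i k) = if k == 0%N then 0 else Defs.esym n i.-1 k.-1.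
Proof.
move=> hi; case: eqP => [->|/eqP hk].
  by apply: ddiff_sym => //; rewrite esym0 /swapvar msym1.
by apply: ddiff_char => //; rewrite esym_diff // lt0n.
Qed.

Lemma ddiff_hsym i k : (0 < i < n)%N ->
  ddiff i (hsym n i k) = if k == 0%N then 0 else hsym n i.+1 k.-1.
Proof.
move=> hi; case: eqP => [->|/eqP hk].
  by apply: ddiff_sym => //; rewrite hsym0 /swapvar msym1.
by apply: ddiff_char => //; rewrite hsym_diff // lt0n.
Qed.


Lemma tperm_val (a b p : 'I_n) :
  (tperm a b p : nat) = if (p : nat) == a then (b : nat) else if (p : nat) == b then (a : nat) else p.
Proof.
case: (tpermP a b p) => [->|->|hpa hpb]; first by rewrite eqxx.
  by case: eqP => [e|_]; [rewrite (val_inj e) | rewrite eqxx].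
case: eqP => [e|_]; first by case: hpa; apply: val_inj.
by case: eqP => [e|_] //; case: hpb; apply: val_inj.
Qed.

Lemma len_swap (w : 'S_n) (a b : 'I_n) : (b : nat) = (a : nat).+1 ->
  (perm_len (tperm a b * w)%g + (w b < w a))%N = (perm_len w + (w a < w b))%N.
Proof.
move=> hab; set s := tperm a b.
pose phi (p : 'I_n * 'I_n) := (s p.1, s p.2).
have phiK : involutive phi by move=> [p q]; rewrite /phi /= !tpermK.
pose Iw (u : 'S_n) := [set p : 'I_n * 'I_n | (p.1 < p.2)%N && (u p.2 < u p.1)%N].
have E : Iw (s * w)%g :\ (a, b) = phi @^-1: (Iw w :\ (a, b)).
  apply/setP => -[p q]; rewrite !inE /= !permM.
  rewrite /phi /=; case: (w (s q) < w (s p))%N; rewrite ?andbF ?andbT //.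
  rewrite !xpair_eqE -!(inj_eq val_inj) /= !tperm_val hab.
  by do ! case: eqP; move=> *; apply/idP/idP; lia.
have C : #|Iw (s * w)%g :\ (a, b)| = #|Iw w :\ (a, b)|.
  by rewrite E card_preimset //; apply: inv_inj.
rewrite /perm_len -/(Iw _) -/(Iw w) (cardsD1 (a, b) (Iw w)) (cardsD1 (a, b) (Iw _)) C.
rewrite !inE /= !permM /s tpermL tpermR hab ltnSn /=.
lia.
Qed.

Lemma pvalS (w : 'S_n) (p : 'I_n) : pval w (p : nat).+1 = (w p : nat).+1.
Proof.
rewrite /pval /=; case: insubP => [q _ eq|]; last by rewrite ltn_ord.
by congr S; congr (nat_of_ord (w _)); apply: val_inj.
Qed.

Lemma desc_iff (w : 'S_n) i (a b : 'I_n) : (a : nat) = i.-1 -> (b : nat) = i -> (0 < i)%N ->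
  is_descent w i = (w b < w a)%N.
Proof.
move=> ha hb hi; rewrite /is_descent.
have e1 : i = (a : nat).+1 by rewrite ha; lia.
have e2 : i.+1 = (b : nat).+1 by rewrite hb.
by rewrite e2 e1 !pvalS ltnS.
Qed.

Lemma asc_iff (w : 'S_n) i (a b : 'I_n) : (a : nat) = i.-1 -> (b : nat) = i -> (0 < i)%N ->
  is_ascent w i = (w a < w b)%N.
Proof.
move=> ha hb hi; rewrite /is_ascent.
have e1 : i = (a : nat).+1 by rewrite ha; lia.
have e2 : i.+1 = (b : nat).+1 by rewrite hb.
by rewrite e2 e1 !pvalS ltnS.
Qed.

Lemma perm_ne (w : 'S_n) (a b : 'I_n) : a != b -> (w a : nat) <> w b.
Proof. by move=> /negbTE h e; move: h; rewrite -(inj_eq (@perm_inj _ w)) -(inj_eq val_inj) /= e eqxx. Qed.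

Lemma schub_step (Sc : 'S_n -> P) (w : 'S_n) i : is_schubert Sc -> (0 < i < n)%N ->
  ddiff i (Sc w) = if is_descent w i then Sc (mul_si w i) else 0.
Proof.
move=> [_ HS] hi; have [a [b [ha hb es ex]]] := si_spec hi.
have hab : a != b by apply: (ab_neq ha hb); case/andP: hi.
rewrite HS; last by case/andP: hi => h1 h2; apply/andP; split; lia.
have hab' : (b : nat) = (a : nat).+1 by rewrite ha hb; lia.
have L := len_swap w hab'.
have Em : (tperm a b * w)%g = mul_si w i by rewrite /mul_si es.
rewrite Em in L.
rewrite (desc_iff w ha hb) ?(proj1 (andP hi)) //.
have hne := perm_ne (w:=w) hab.
case: (ltngtP (w a) (w b)) => h; last by case: hne.
  have h1 : (w b < w a)%N = false by rewrite ltnNge ltnW.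
  move: L; rewrite h h1 /= => L.
  by case: eqP => // e; lia.
have h1 : (w a < w b)%N = false by rewrite ltnNge ltnW.
move: L; rewrite h h1 /= => L.
by case: eqP => // e; lia.
Qed.


Lemma len_rel (v : 'S_n) i : (0 < i < n)%N ->
  (is_descent v i -> (perm_len (mul_si v i)).+1 = perm_len v) /\
  (~~ is_descent v i -> perm_len (mul_si v i) = (perm_len v).+1).
Proof.
move=> hi; have [a [b [ha hb es ex]]] := si_spec hi.
have hab : a != b by apply: (ab_neq ha hb); case/andP: hi.
have hab' : (b : nat) = (a : nat).+1 by rewrite ha hb; lia.
have L := len_swap v hab'.
have Em : (tperm a b * v)%g = mul_si v i by rewrite /mul_si es.
rewrite Em in L.
rewrite (desc_iff v ha hb) ?(proj1 (andP hi)) //.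
have hne := perm_ne (w:=v) hab.
case: (ltngtP (v a) (v b)) => h; last by case: hne.
  have h1 : (v b < v a)%N = false by rewrite ltnNge ltnW.
  by move: L; rewrite h h1 /= => L; split => // _; lia.
have h1 : (v a < v b)%N = false by rewrite ltnNge ltnW.
by move: L; rewrite h h1 /= => L; split => // _; lia.
Qed.

Lemma asc_desc (v : 'S_n) i : (0 < i < n)%N -> is_ascent v i = ~~ is_descent v i.
Proof.
move=> hi; have [a [b [ha hb es ex]]] := si_spec hi.
have hab : a != b by apply: (ab_neq ha hb); case/andP: hi.
have h0 : (0 < i)%N by case/andP: hi.
rewrite (desc_iff v ha hb h0) (asc_iff v ha hb h0).
have := perm_ne (w:=v) hab; case: ltngtP => //.
Qed.

Definition fv (k j p : nat) : nat :=
  (if p < j then k.-1 - p else if p == j then k else if p <= k then k - p else p)%N.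
Definition fv' k j p := if (j <= k)%N && (k < n)%N then fv k j p else p.

Lemma fv'_lt k j (p : 'I_n) : (fv' k j p < n)%N.
Proof.
rewrite /fv'; case: ifP => [/andP [h1 h2]|_]; last exact: ltn_ord.
have := ltn_ord p; rewrite /fv; ifs.
Qed.

Definition fvo k j (p : 'I_n) : 'I_n := Ordinal (fv'_lt k j p).

Lemma fvo_inj k j : injective (fvo k j).
Proof.
move=> p q /(congr1 val) /=; rewrite /fv'; case: ifP => [/andP [h1 h2]|_]; last exact: val_inj.
move=> e; apply: val_inj => /=; move: e; rewrite /fv; ifs.
Qed.

Definition vperm k j : 'S_n := perm (@fvo_inj k j).

Lemma vpermE k j (p : 'I_n) : (j <= k)%N -> (k < n)%N -> (vperm k j p : nat) = fv k j p.
Proof. by move=> h1 h2; rewrite permE /= /fv' h1 h2. Qed.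

Definition alpha k j : 'X_{1..n} :=
  [multinom (if p < j then k.-1 - p else if p <= k then k - p else 0)%N | p < n].

Lemma vperm_step k j : (j < k)%N -> (k < n)%N -> mul_si (vperm k j) j.+1 = vperm k j.+1.
Proof.
move=> h1 h2; have hi : (0 < j.+1 < n)%N by apply/andP; split; lia.
have [a [b [ha hb es _]]] := si_spec hi.
rewrite /mul_si es; apply/permP => p; apply/val_inj.
rewrite permM /= !vpermE ?tperm_val ?ha ?hb /=; try lia.
rewrite /fv; ifs.
Qed.

Lemma vperm_desc k j : (j < k)%N -> (k < n)%N -> is_descent (vperm k j) j.+1.
Proof.
move=> h1 h2; have hi : (0 < j.+1 < n)%N by apply/andP; split; lia.
have [a [b [ha hb es _]]] := si_spec hi.
rewrite (desc_iff _ ha hb) // !vpermE; try lia.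
rewrite ha hb /fv /=; ifs.
Qed.

Lemma alpha_step k j : (j < k)%N -> (k < n)%N ->
  ddiff j.+1 ('X_[alpha k j] : P) = 'X_[alpha k j.+1].
Proof.
move=> h1 h2; have hi : (0 < j.+1 < n)%N by apply/andP; split; lia.
have [a [b [ha hb es ex]]] := si_spec hi.
apply: ddiff_char => //; rewrite /swapvar es msymX tpermV ex.
have E1 : alpha k j = (U_(a) + alpha k j.+1)%MM.
  apply/mnmP => p; rewrite mnmDE mnm1E !mnmE -(inj_eq val_inj) /= ha /=; ifs.
have E2 : [multinom alpha k j (tperm a b i) | i < n] = (U_(b) + alpha k j.+1)%MM.
  apply/mnmP => p; rewrite mnmDE mnm1E !mnmE -(inj_eq val_inj) /= tperm_val ha hb /=; ifs.
by rewrite E2 {1}E1 !mpolyXD mulrBl.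
Qed.

Lemma xdelta_alpha : (0 < n)%N -> xdelta n = 'X_[alpha n.-1 0].
Proof.
move=> hn; rewrite /xdelta (mpolyXE_id int); apply: eq_bigr => p _; rewrite mnmE.
congr (_ ^+ _); have := ltn_ord p; ifs.
Qed.

Lemma vperm_w0 : (0 < n)%N -> vperm n.-1 0 = w0 n.
Proof.
move=> hn; apply/permP => p; apply/val_inj => /=; rewrite vpermE; try lia.
rewrite /w0 permE /= /fv; have := ltn_ord p; ifs.
Qed.

Lemma vperm_kk k : (0 < k)%N -> (k < n)%N -> vperm k k = vperm k.-1 0.
Proof.
move=> h1 h2; apply/permP => p; apply/val_inj => /=; rewrite !vpermE; try lia.
rewrite /fv; ifs.
Qed.

Lemma alpha_kk k : (0 < k)%N -> alpha k k = alpha k.-1 0.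
Proof. by move=> h1; apply/mnmP => p; rewrite !mnmE; ifs. Qed.

Lemma vperm00 : (0 < n)%N -> vperm 0 0 = 1%g.
Proof. by move=> hn; apply/permP => p; apply/val_inj => /=; rewrite perm1 vpermE // /fv; ifs. Qed.

Lemma alpha00 : alpha 0 0 = 0%MM.
Proof. by apply/mnmP => p; rewrite !mnmE ?mnm0E; ifs. Qed.

Lemma chain_inner (Sc : 'S_n -> P) k : is_schubert Sc -> (k < n)%N ->
  Sc (vperm k 0) = 'X_[alpha k 0] -> forall j, (j <= k)%N -> Sc (vperm k j) = 'X_[alpha k j].
Proof.
move=> HS hk h0; elim => [//|j IH] hj.
have hi : (0 < j.+1 < n)%N by apply/andP; split; lia.
rewrite -vperm_step //; have := schub_step (vperm k j) HS hi.
by rewrite vperm_desc // => <-; rewrite IH 1?ltnW // alpha_step.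
Qed.

Lemma chain_outer (Sc : 'S_n -> P) : is_schubert Sc -> (0 < n)%N ->
  forall t k, (k + t = n.-1)%N -> Sc (vperm k 0) = 'X_[alpha k 0].
Proof.
move=> HS hn; elim => [|t IH] k hk.
  by rewrite addn0 in hk; rewrite hk vperm_w0 // (proj1 HS) xdelta_alpha.
have hk1 : (k.+1 + t = n.-1)%N by lia.
have hk2 : (k.+1 < n)%N by lia.
have := chain_inner HS hk2 (IH _ hk1) (leqnn k.+1).
by rewrite vperm_kk // alpha_kk.
Qed.

Lemma schub_one (Sc : 'S_n -> P) : is_schubert Sc -> Sc 1%g = 1.
Proof.
move=> HS; case: (posnP n) => hn.
  have -> : (1 : 'S_n)%g = w0 n by apply/permP => p; move: (ltn_ord p); rewrite {2}hn.
  by rewrite (proj1 HS) /xdelta; move: (xdelta n); rewrite hn big_ord0.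
by rewrite -vperm00 // (chain_outer HS hn (t := n.-1)) // alpha00 mpolyX0.
Qed.


Lemma incr_id (v : 'S_n) :
  (forall p q : 'I_n, (q : nat) = (p : nat).+1 -> (v p < v q)%N) -> v = 1%g.
Proof.
move=> H.
have H1 : forall m (p : 'I_n), (p : nat) = m -> (m <= v p)%N.
  elim => [//|m IH] p hp.
  have hm : (m < n)%N by have := ltn_ord p; lia.
  have := H (Ordinal hm) p hp; have := IH (Ordinal hm) erefl; lia.
have H2 : forall d (p : 'I_n), ((p : nat) + d = n.-1)%N -> (v p <= p)%N.
  elim => [|d IH] p hp; first by have := ltn_ord (v p); lia.
  have hm : ((p : nat).+1 < n)%N by have := ltn_ord p; lia.
  have := H p (Ordinal hm) erefl; have := IH (Ordinal hm) ltac:(simpl; lia); simpl; lia.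
apply/permP => p; apply/val_inj => /=; rewrite perm1.
by have := H1 p p erefl; have := H2 (n.-1 - p)%N p ltac:(have := ltn_ord p; lia); lia.
Qed.

Lemma decr_w0 (v : 'S_n) :
  (forall p q : 'I_n, (q : nat) = (p : nat).+1 -> (v q < v p)%N) -> v = w0 n.
Proof.
move=> H.
have H1 : forall m (p : 'I_n), (p : nat) = m -> (v p <= n.-1 - m)%N.
  elim => [|m IH] p hp; first by have := ltn_ord (v p); lia.
  have hm : (m < n)%N by have := ltn_ord p; lia.
  have := H (Ordinal hm) p hp; have := IH (Ordinal hm) erefl; lia.
have H2 : forall d (p : 'I_n), ((p : nat) + d = n.-1)%N -> (d <= v p)%N.
  elim => [|d IH] p hp; first by [].
  have hm : ((p : nat).+1 < n)%N by have := ltn_ord p; lia.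
  have := H p (Ordinal hm) erefl; have := IH (Ordinal hm) ltac:(simpl; lia); simpl; lia.
apply/permP => p; apply/val_inj => /=; rewrite /w0 permE /=.
by have := H1 p p erefl; have := H2 (n.-1 - p)%N p ltac:(have := ltn_ord p; lia); lia.
Qed.

Lemma adj_ord (p q : 'I_n) : (q : nat) = (p : nat).+1 ->
  exists i, [/\ (0 < i < n)%N, (p : nat) = i.-1 & (q : nat) = i].
Proof. by move=> e; exists q; rewrite e /=; split => //; rewrite -e ltn_ord. Qed.

Lemma no_desc_id (v : 'S_n) : (forall i, (0 < i < n)%N -> ~~ is_descent v i) -> v = 1%g.
Proof.
move=> H; apply: incr_id => p q e.
have [i [hi hp hq]] := adj_ord e.
have hab : p != q by apply/eqP => E; move: e; rewrite E; lia.
have hd := H i hi; rewrite (desc_iff v hp hq (proj1 (andP hi))) in hd.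
have hne := perm_ne (w:=v) hab.
move: hd hne; lia.
Qed.

Lemma no_asc_w0 (v : 'S_n) : (forall i, (0 < i < n)%N -> ~~ is_ascent v i) -> v = w0 n.
Proof.
move=> H; apply: decr_w0 => p q e.
have [i [hi hp hq]] := adj_ord e.
have hab : p != q by apply/eqP => E; move: e; rewrite E; lia.
have hd := H i hi; rewrite (asc_iff v hp hq (proj1 (andP hi))) in hd.
have hne := perm_ne (w:=v) hab.
move: hd hne; lia.
Qed.

Lemma ddiff0 i : (0 < i < n)%N -> ddiff i (0 : P) = 0.
Proof. by move=> hi; apply: ddiff_sym => //; rewrite /swapvar msym0. Qed.

Lemma schub_nz (Sc : 'S_n -> P) v : is_schubert Sc -> Sc v != 0.
Proof.
move=> HS; move: {2}(perm_len v) (leqnn (perm_len v)) => N; elim: N v => [|N IH] v hv.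
  have -> : v = 1%g.
    apply: no_desc_id => i hi; apply/negP => hd.
    by have := (proj1 (len_rel v hi)) hd; lia.
  by rewrite schub_one // oner_eq0.
case: (boolP [exists i : 'I_n, (0 < i)%N && is_descent v i]).
  case/existsP => i /andP [i0 hd].
  have hi : (0 < i < n)%N by rewrite i0 ltn_ord.
  have := (proj1 (len_rel v hi)) hd => hl.
  have := schub_step v HS hi; rewrite hd => E.
  apply/eqP => Z; move: E; rewrite Z ddiff0 // => E.
  by have := IH (mul_si v i) ltac:(lia); rewrite -E eqxx.
move=> hn; have -> : v = 1%g.
  apply: no_desc_id => i hi; apply/negP => hd; case/existsP: hn.
  by exists (Ordinal (proj2 (andP hi))); rewrite /= hd (proj1 (andP hi)).
by rewrite schub_one // oner_eq0.
Qed.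


Definition Dlt (f : P) := forall m, f@_m != 0 -> forall p : 'I_n, (m p <= n.-1 - p)%N.

Lemma coef_xdiff (a b : 'I_n) (g : P) M : (('X_a - 'X_b) * g)@_M =
  (if (0 < M a)%N then g@_(M - U_(a))%MM else 0) - (if (0 < M b)%N then g@_(M - U_(b))%MM else 0).
Proof. by rewrite mulrBl mcoeffB !mcoeffXUM. Qed.

Lemma addUK (m : 'X_{1..n}) (a : 'I_n) : ((m + U_(a)) - U_(a))%MM = m.
Proof. exact: addmK. Qed.

Lemma bound_a (a b : 'I_n) (g : P) (c : 'I_n -> nat) : a != b ->
  (forall M, (('X_a - 'X_b) * g)@_M != 0 -> forall p, (M p <= c p)%N) ->
  forall k (m : 'X_{1..n}), m b = k -> g@_m != 0 -> forall p, p != b -> (m p + (p == a) <= c p)%N.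
Proof.
move=> /negbTE hab Hc; elim => [|k IH] m hk hm p hp.
  have := Hc (m + U_(a))%MM; rewrite coef_xdiff !mnmDE !mnm1E eqxx hab hk addn0 addn1 /=.
  rewrite addUK subr0 => /(_ hm p); rewrite mnmDE mnm1E eq_sym; lia.
have := Hc (m + U_(a))%MM; rewrite coef_xdiff !mnmDE !mnm1E eqxx hab hk addn0 addn1 /=.
rewrite addUK; case: (boolP (g@_m - g@_(m + U_(a) - U_(b))%MM == 0)) => [/eqP Z _|nz /(_ isT p)].
  move/subr0_eq: Z => Z.
  have hk' : (m + U_(a) - U_(b))%MM b = k by rewrite mnmBE mnmDE !mnm1E eqxx hab hk; lia.
  have := IH _ hk' ltac:(by rewrite -Z) p hp.
  rewrite mnmBE mnmDE !mnm1E (eq_sym a p) (eq_sym b p) (negbTE hp); lia.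
by rewrite mnmDE mnm1E eq_sym; lia.
Qed.

Lemma bound_b (a b : 'I_n) (g : P) (c : 'I_n -> nat) : a != b ->
  (forall M, (('X_a - 'X_b) * g)@_M != 0 -> forall p, (M p <= c p)%N) ->
  forall k (m : 'X_{1..n}), m a = k -> g@_m != 0 -> (m b + 1 <= c b)%N.
Proof.
move=> /negbTE hab Hc; have hba : (b == a) = false by rewrite eq_sym.
elim => [|k IH] m hk hm.
  have := Hc (m + U_(b))%MM; rewrite coef_xdiff !mnmDE !mnm1E eqxx hba hk addn0 addn1 /=.
  rewrite addUK sub0r oppr_eq0 => /(_ hm b); rewrite mnmDE mnm1E eqxx; lia.
have := Hc (m + U_(b))%MM; rewrite coef_xdiff !mnmDE !mnm1E eqxx hba hk addn0 addn1 /=.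
rewrite addUK; case: (boolP (g@_(m + U_(b) - U_(a))%MM - g@_m == 0)) => [/eqP Z _|nz /(_ isT b)].
  move/subr0_eq: Z => Z.
  have hk' : (m + U_(b) - U_(a))%MM a = k by rewrite mnmBE mnmDE !mnm1E eqxx hba hk; lia.
  have := IH _ hk' ltac:(by rewrite Z).
  rewrite mnmBE mnmDE !mnm1E eqxx hab; lia.
by rewrite mnmDE mnm1E eqxx; lia.
Qed.

Lemma Dlt_ddiff i (f : P) : (0 < i < n)%N -> Dlt f -> Dlt (ddiff i f).
Proof.
move=> hi Hf; have [a [b [ha hb es ex]]] := si_spec hi.
have hab : a != b by apply: (ab_neq ha hb); case/andP: hi.
have hab' : (b : nat) = (a : nat).+1 by rewrite ha hb; have := proj1 (andP hi); lia.
have E := ddiffP f hi; rewrite ex in E.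
pose c (p : 'I_n) := if p == b then (n.-1 - a)%N else (n.-1 - p)%N.
have Hc : forall M, (('X_a - 'X_b) * ddiff i f)@_M != 0 -> forall p, (M p <= c p)%N.
  move=> M; rewrite E mcoeffB /swapvar es mcoeff_sym => nz p.
  case: (boolP (f@_M == 0)) => [/eqP f0|f0].
    move: nz; rewrite f0 sub0r oppr_eq0 => /Hf /(_ (tperm a b p)).
    rewrite mnmE tpermK /c tperm_val -(inj_eq val_inj) /= hab'; ifs.
  have := Hf _ f0 p; rewrite /c -(inj_eq val_inj) /= hab'; ifs.
move=> m hm p.
have [->|hp] := eqVneq p b.
  by have := bound_b hab Hc erefl hm; rewrite /c eqxx hab'; lia.
have := bound_a hab Hc erefl hm hp; rewrite /c (negbTE hp); lia.
Qed.

Lemma Dlt_xdelta : Dlt (xdelta n).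
Proof.
case: (posnP n) => hn m; first by move=> _ p; have := ltn_ord p; lia.
rewrite xdelta_alpha // mcoeffX; case: (@eqP _ (alpha n.-1 0) m) => [<- _ p|_]; last by rewrite eqxx.
rewrite mnmE.
have := ltn_ord p; ifs.
Qed.

Lemma len_le (v : 'S_n) : (perm_len v <= n * n)%N.
Proof. by rewrite /perm_len; apply: leq_trans (max_card _) _; rewrite card_prod card_ord. Qed.

Lemma mul_siK (v : 'S_n) i : (0 < i < n)%N -> mul_si (mul_si v i) i = v.
Proof.
move=> hi; have [a [b [ha hb es ex]]] := si_spec hi.
by rewrite /mul_si es mulgA tperm2 mul1g.
Qed.

Lemma schub_Dlt (Sc : 'S_n -> P) v : is_schubert Sc -> Dlt (Sc v).
Proof.
move=> HS; move: {2}(n * n - perm_len v)%N (leqnn (n * n - perm_len v)%N) => d.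
elim: d v => [|d IH] v hv.
  have -> : v = w0 n.
    apply: no_asc_w0 => i hi; apply/negP; rewrite asc_desc // => hd.
    by have := (proj2 (len_rel v hi)) hd; have := len_le (mul_si v i); lia.
  by rewrite (proj1 HS); apply: Dlt_xdelta.
case: (boolP [exists i : 'I_n, (0 < i)%N && is_ascent v i]).
  case/existsP => i /andP [i0 ha].
  have hi : (0 < i < n)%N by rewrite i0 ltn_ord.
  rewrite asc_desc // in ha.
  have hl := (proj2 (len_rel v hi)) ha.
  have hd' : is_descent (mul_si v i) i.
    apply/negPn/negP => nd; have := (proj2 (len_rel (mul_si v i) hi)) nd.
    by rewrite mul_siK //; lia.
  have := schub_step (mul_si v i) HS hi; rewrite hd' mul_siK // => <-.
  apply: Dlt_ddiff => //; apply: IH.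
  by have := len_le (mul_si v i); lia.
move=> hn; have -> : v = w0 n.
  apply: no_asc_w0 => i hi; apply/negP => ha; case/existsP: hn.
  by exists (Ordinal (proj2 (andP hi))); rewrite /= ha (proj1 (andP hi)).
by rewrite (proj1 HS); apply: Dlt_xdelta.
Qed.


Lemma esym_nz j k : (k <= j)%N -> (k <= n)%N -> Defs.esym n j k != 0.
Proof.
move=> hkj hk; pose A0 := [set widen_ord hk i | i : 'I_k].
have cA : #|A0| = k.
  rewrite card_imset ?card_ord // => x y /(congr1 val) /= e; exact: val_inj.
apply/eqP => Z; have := esym_coef j k (mset A0); rewrite Z mcoeff0.
suff -> : echar j k (mset A0) by [].
apply/echarP; split; last by rewrite mdeg_mset.
move=> p; rewrite mnmE; split; first by case: (p \in A0).
move=> hp; case: (boolP (p \in A0)) => // /imsetP [x _ ex].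
by move: hp; rewrite ex /=; have := ltn_ord x; lia.
Qed.

Lemma hsym_nz j k : (0 < j)%N -> (j <= n)%N -> hsym n j k != 0.
Proof.
move=> hj hn; have h0 : (0 < n)%N by lia.
pose z : 'I_n := Ordinal h0.
apply/eqP => Z; have := hsym_coef j k (U_(z) *+ k)%MM; rewrite Z mcoeff0.
suff -> : hchar j k (U_(z) *+ k)%MM by [].
apply/hcharP; split; first by rewrite mdegMn mdeg1 mul1n.
move=> p hp; rewrite mulmnE mnm1E.
have -> : (z == p) = false by apply/eqP => e; move: hp; rewrite -e /=; lia.
by [].
Qed.

Lemma prod_split (F : nat -> P) i : (0 < i <= n)%N ->
  \prod_(1 <= j < n.+1) F j = F i * \prod_(j <- index_iota 1 n.+1 | j != i) F j.
Proof.
move=> hi; rewrite (bigD1_seq i) //=; last exact: iota_uniq.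
by rewrite mem_index_iota; lia.
Qed.

Lemma prod_split2 (F : nat -> P) i i' : i' != i -> (0 < i' <= n)%N ->
  \prod_(j <- index_iota 1 n.+1 | j != i) F j =
  F i' * \prod_(j <- [seq x <- index_iota 1 n.+1 | x != i] | j != i') F j.
Proof.
move=> hne hi; rewrite -big_filter (bigD1_seq i') //=.
  by rewrite mem_filter hne mem_index_iota; lia.
by rewrite filter_uniq // iota_uniq.
Qed.

Lemma swap_prod_esym i (a : nat -> nat) : (0 < i < n)%N ->
  swapvar i (\prod_(j <- index_iota 1 n.+1 | j != i) Defs.esym n j (a j)) =
  \prod_(j <- index_iota 1 n.+1 | j != i) Defs.esym n j (a j).
Proof.
move=> hi; rewrite /swapvar rmorph_prod; apply: eq_bigr => j hj.
exact: (swap_esym_other _ hi hj).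
Qed.

Lemma swap_prod_hsym i (a : nat -> nat) : (0 < i < n)%N ->
  swapvar i (\prod_(j <- index_iota 1 n.+1 | j != i) hsym n j (a j)) =
  \prod_(j <- index_iota 1 n.+1 | j != i) hsym n j (a j).
Proof.
move=> hi; rewrite /swapvar rmorph_prod; apply: eq_bigr => j hj.
exact: (swap_hsym_other _ hi hj).
Qed.

Lemma ddiff_emono i (a : nat -> nat) : (0 < i < n)%N ->
  ddiff i (emono n a) = (\prod_(j <- index_iota 1 n.+1 | j != i) Defs.esym n j (a j)) *
    (if a i == 0%N then 0 else Defs.esym n i.-1 (a i).-1).
Proof.
move=> hi; rewrite /emono (prod_split _ (i := i)); last by case/andP: hi => h1 h2; lia.
by rewrite mulrC ddiff_symM // ?swap_prod_esym // ddiff_esym.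
Qed.

Lemma ddiff_hmono i (a : nat -> nat) : (0 < i < n)%N ->
  ddiff i (hmono n a) = (\prod_(j <- index_iota 1 n.+1 | j != i) hsym n j (a j)) *
    (if a i == 0%N then 0 else hsym n i.+1 (a i).-1).
Proof.
move=> hi; rewrite /hmono (prod_split _ (i := i)); last by case/andP: hi => h1 h2; lia.
by rewrite mulrC ddiff_symM // ?swap_prod_hsym // ddiff_hsym.
Qed.

Lemma prod_esym_nz (a : nat -> nat) i : std_e n a ->
  \prod_(j <- index_iota 1 n.+1 | j != i) Defs.esym n j (a j) != 0.
Proof.
move=> hs; rewrite big_seq_cond; apply: (big_ind (fun x => x != 0)).
- exact: oner_neq0.
- by move=> x y hx hy; apply: mulf_neq0.
move=> j /andP [hj _]; rewrite mem_index_iota in hj.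
have := hs j ltac:(lia) => h; apply: esym_nz => //; lia.
Qed.

Lemma prod_hsym_nz (a : nat -> nat) i :
  \prod_(j <- index_iota 1 n.+1 | j != i) hsym n j (a j) != 0.
Proof.
rewrite big_seq_cond; apply: (big_ind (fun x => x != 0)).
- exact: oner_neq0.
- by move=> x y hx hy; apply: mulf_neq0.
move=> j /andP [hj _]; rewrite mem_index_iota in hj.
apply: hsym_nz; lia.
Qed.


Lemma mdeg_single (m : 'X_{1..n}) (q : 'I_n) : mdeg m = m q -> m = (U_(q) *+ m q)%MM.
Proof.
move=> hd; apply/mnmP => p; rewrite mulmnE mnm1E.
have [<-|ne] := eqVneq q p; first by rewrite mul1n.
rewrite mul0n; move: hd; rewrite mdegE (bigD1 q) //= (bigD1 p) //=; last by rewrite eq_sym.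
lia.
Qed.

Lemma hmono_last (f : P) (a : nat -> nat) (lst : 'I_n) : (lst : nat) = n.-1 ->
  Dlt f -> f = hmono n a -> a n = 0%N.
Proof.
move=> hl hD hf; apply/eqP/negPn/negP => hne; set t := a n in hne.
have hn : (0 < n)%N by have := ltn_ord lst; lia.
pose Q := \prod_(j <- index_iota 1 n.+1 | j != n) hsym n j (a j).
have E : hmono n a = Q * hsym n n t.
  by rewrite /hmono (prod_split _ (i := n)); [exact: mulrC | lia].
have Qnz : Q != 0 by apply: prod_hsym_nz.
have Qfree : forall m, Q@_m != 0 -> m lst = 0%N.
  rewrite /Q big_seq_cond; apply: (big_ind (fun x : P => forall m, x@_m != 0 -> m lst = 0%N)).
  - by move=> m; rewrite mcoeff1; case: (@eqP _ m 0%MM) => [->|_]; rewrite ?mnm0E ?eqxx.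
  - move=> x y hx hy m; rewrite -mcoeff_msupp => /msuppM_le /allpairsP [[m1 m2] [h1 h2 ->]] /=.
    by rewrite mnmDE (hx m1) ?(hy m2) // -mcoeff_msupp.
  move=> j /andP [hj hjn] m; rewrite mem_index_iota in hj.
  rewrite hsym_coef; case: (boolP (hchar j (a j) m)) => // /hcharP [_ H] _.
  by apply: H; rewrite hl; move/eqP: hjn; lia.
have [m0 hm0] : exists m0, Q@_m0 != 0.
  case E0: (msupp Q) => [|m0 s].
    by move/eqP: E0; rewrite msupp_eq0 (negbTE Qnz).
  by exists m0; rewrite -mcoeff_msupp E0 mem_head.
pose T := (U_(lst) *+ t)%MM.
pose H' := hsym n n t - 'X_[T].
have hT : hchar n t T.
  apply/hcharP; split; first by rewrite mdegMn mdeg1 mul1n.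
  by move=> p hp; have := ltn_ord p; lia.
have H'T : forall m2, H'@_m2 != 0 -> m2 lst = t -> False.
  move=> m2; rewrite mcoeffB hsym_coef mcoeffX => nz h2.
  have e2 : m2 = T.
    move: nz; case: (boolP (hchar n t m2)) => [/hcharP [hd _] _|_].
      by rewrite /T -h2; apply: mdeg_single; rewrite hd.
    by case: (@eqP _ T m2) => [e|_]; [rewrite e | rewrite subrr eqxx].
  by move: nz; rewrite e2 hT eqxx subrr eqxx.
have hM : (hmono n a)@_(T + m0)%MM != 0.
  rewrite E -[hsym n n t](subrK 'X_[T]) -/H' mulrDr mcoeffD mcoeffMX.
  suff -> : (Q * H')@_(T + m0)%MM = 0 by rewrite add0r.
  apply/eqP; rewrite mcoeff_eq0; apply/negP => /msuppM_le /allpairsP [[m1 m2] [h1 h2 e]] /=.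
  move: e => /= /mnmP /(_ lst); rewrite !mnmDE (Qfree m1) -?mcoeff_msupp //.
  rewrite /T mulmnE mnm1E eqxx mul1n (Qfree m0) // addn0 add0n => e.
  by apply: (H'T m2); rewrite -?mcoeff_msupp.
have := hD (T + m0)%MM; rewrite hf => /(_ hM lst).
rewrite mnmDE /T mulmnE mnm1E eqxx mul1n hl; lia.
Qed.

End Aux.

Local Close Scope ring_scope.

Theorem lemma6 (n : nat) (S : 'S_n -> {mpoly int[n]}) (HS : is_schubert S)
    (w : 'S_n) :
  (forall a : nat -> nat, std_e n a -> S w = emono n a ->
     (forall i : nat, 1 <= i <= n.-1 -> (a i = 0 <-> is_ascent w i)) /\
     (forall i : nat, 1 <= i <= n.-1 -> is_descent w i -> is_ascent w i.-1 ->
        ddiff i (S w) = S (mul_si w i) /\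
        exists b : nat -> nat, std_e n b /\ S (mul_si w i) = emono n b)) /\
  (forall a : nat -> nat, S w = hmono n a ->
     (forall i : nat, 1 <= i <= n.-1 -> (a i = 0 <-> is_ascent w i)) /\
     (forall i : nat, 1 <= i <= n.-1 -> is_descent w i -> is_ascent w i.+1 ->
        ddiff i (S w) = S (mul_si w i) /\
        exists b : nat -> nat, S (mul_si w i) = hmono n b)).
Proof.
split.
- move=> a hstd hw.
  have P1 : forall i : nat, (1 <= i <= n.-1)%N -> (a i = 0%N <-> is_ascent w i).
    move=> i hi'; have hi : (0 < i < n)%N by lia.
    have D := schub_step w HS hi; rewrite hw ddiff_emono // in D.
    rewrite asc_desc //.
    have Rnz := prod_esym_nz i hstd.
    split.
      move=> h0; rewrite h0 eqxx mulr0 in D; apply/negP => hd; rewrite hd in D.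
      by have := schub_nz (mul_si w i) HS; rewrite -D eqxx.
    move=> nd; rewrite (negbTE nd) in D; apply/eqP/negPn/negP => hne.
    rewrite (negbTE hne) in D; move/eqP: D; apply/negP; apply: mulf_neq0 => //.
    have hai := hstd i ltac:(lia); apply: esym_nz; lia.
  split => // i hi' hd ha'.
  have hi : (0 < i < n)%N by lia.
  have hiN : (0 < i <= n)%N by lia.
  have D := schub_step w HS hi; rewrite hd in D; split => //.
  have ai : a i != 0%N.
    apply/eqP => h0; have := (proj1 (P1 i hi') h0); rewrite asc_desc // hd //.
  have hai := hstd i ltac:(lia).
  rewrite hw ddiff_emono // (negbTE ai) in D.
  have [i1|ni1] := eqVneq i 1%N.
    have ai1 : (a i).-1 = 0%N by move: hai ai; rewrite i1; lia.
    pose b := fun j => if j == i then 0%N else a j.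
    exists b; split.
      by move=> j hj; rewrite /b; case: eqP => // _; apply: hstd.
    rewrite -D /emono (prod_split (fun j => Defs.esym n j (b j)) hiN) /=.
    have bi : b i = 0%N by rewrite /b eqxx.
    rewrite bi esym0 mul1r.
    rewrite ai1.
    rewrite esym0 mulr1; apply: eq_bigr => j hj; by rewrite /b (negbTE hj).
  have hne : i.-1 != i by apply/eqP; lia.
  have hi1 : (0 < i.-1 <= n)%N by lia.
  have ha0 : a i.-1 = 0%N by apply/(P1 i.-1); [lia | exact: ha'].
  have hai1 : ((a i).-1 <= i.-1)%N by lia.
  pose b := fun j => if j == i then 0%N else if j == i.-1 then (a i).-1 else a j.
  exists b; split.
    move=> j hj; rewrite /b; case: eqP => // _; case: eqP => [->|_]; last exact: hstd.
    exact: hai1.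
  have L1 : (\prod_(j <- index_iota 1 n.+1 | j != i) Defs.esym n j (a j))%R =
      (\prod_(j <- [seq x <- index_iota 1 n.+1 | x != i] | j != i.-1) Defs.esym n j (a j))%R.
    by rewrite (prod_split2 (fun j => Defs.esym n j (a j)) hne hi1) /= ha0 esym0 mul1r.
  have L2 : (\prod_(j <- index_iota 1 n.+1 | j != i) Defs.esym n j (b j))%R =
      (Defs.esym n i.-1 (a i).-1 *
      \prod_(j <- [seq x <- index_iota 1 n.+1 | x != i] | j != i.-1) Defs.esym n j (a j))%R.
    have bi1 : b i.-1 = (a i).-1 by rewrite /b (negbTE hne) eqxx.
    have bj : forall j, j != i -> j != i.-1 -> b j = a j.
      by move=> j h1 h2; rewrite /b (negbTE h1) (negbTE h2).
    have L3 : (\prod_(j <- [seq x <- index_iota 1 n.+1 | x != i] | j != i.-1) Defs.esym n j (b j))%R =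
        (\prod_(j <- [seq x <- index_iota 1 n.+1 | x != i] | j != i.-1) Defs.esym n j (a j))%R.
      rewrite big_seq_cond [RHS]big_seq_cond; apply: eq_bigr => j /andP [hj hj'].
      by rewrite mem_filter in hj; case/andP: hj => hj _; rewrite bj.
    by rewrite (prod_split2 (fun j => Defs.esym n j (b j)) hne hi1) /= bi1 L3.
  rewrite -D /emono (prod_split (fun j => Defs.esym n j (b j)) hiN) /=.
  have bi : b i = 0%N by rewrite /b eqxx.
  by rewrite bi esym0 mul1r L1 L2 mulrC.
- move=> a hw.
  have P1 : forall i : nat, (1 <= i <= n.-1)%N -> (a i = 0%N <-> is_ascent w i).
    move=> i hi'; have hi : (0 < i < n)%N by lia.
    have D := schub_step w HS hi; rewrite hw ddiff_hmono // in D.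
    rewrite asc_desc //.
    have Rnz := @prod_hsym_nz n a i.
    split.
      move=> h0; rewrite h0 eqxx mulr0 in D; apply/negP => hd; rewrite hd in D.
      by have := schub_nz (mul_si w i) HS; rewrite -D eqxx.
    move=> nd; rewrite (negbTE nd) in D; apply/eqP/negPn/negP => hne.
    rewrite (negbTE hne) in D; move/eqP: D; apply/negP; apply: mulf_neq0 => //.
    apply: hsym_nz; lia.
  split => // i hi' hd ha'.
  have hi : (0 < i < n)%N by lia.
  have hiN : (0 < i <= n)%N by lia.
  have D := schub_step w HS hi; rewrite hd in D; split => //.
  have ai : a i != 0%N.
    apply/eqP => h0; have := (proj1 (P1 i hi') h0); rewrite asc_desc // hd //.
  have hne : i.+1 != i by apply/eqP; lia.
  have hi1 : (0 < i.+1 <= n)%N by lia.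
  have ha0 : a i.+1 = 0%N.
    have [hlt|hge] := ltnP i.+1 n.
      by apply/(P1 i.+1); [lia | exact: ha'].
    have hl : (n.-1 < n)%N by lia.
    have e : i.+1 = n by lia.
    rewrite e; exact: (@hmono_last n (S w) a (Ordinal hl) erefl (@schub_Dlt n S w HS) hw).
  rewrite hw ddiff_hmono // (negbTE ai) in D.
  pose b := fun j => if j == i then 0%N else if j == i.+1 then (a i).-1 else a j.
  exists b.
  have L1 : (\prod_(j <- index_iota 1 n.+1 | j != i) hsym n j (a j))%R =
      (\prod_(j <- [seq x <- index_iota 1 n.+1 | x != i] | j != i.+1) hsym n j (a j))%R.
    by rewrite (prod_split2 (fun j => hsym n j (a j)) hne hi1) /= ha0 hsym0 mul1r.
  have L2 : (\prod_(j <- index_iota 1 n.+1 | j != i) hsym n j (b j))%R =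
      (hsym n i.+1 (a i).-1 *
      \prod_(j <- [seq x <- index_iota 1 n.+1 | x != i] | j != i.+1) hsym n j (a j))%R.
    have bi1 : b i.+1 = (a i).-1 by rewrite /b (negbTE hne) eqxx.
    have bj : forall j, j != i -> j != i.+1 -> b j = a j.
      by move=> j h1 h2; rewrite /b (negbTE h1) (negbTE h2).
    have L3 : (\prod_(j <- [seq x <- index_iota 1 n.+1 | x != i] | j != i.+1) hsym n j (b j))%R =
        (\prod_(j <- [seq x <- index_iota 1 n.+1 | x != i] | j != i.+1) hsym n j (a j))%R.
      rewrite big_seq_cond [RHS]big_seq_cond; apply: eq_bigr => j /andP [hj hj'].
      by rewrite mem_filter in hj; case/andP: hj => hj _; rewrite bj.
    by rewrite (prod_split2 (fun j => hsym n j (b j)) hne hi1) /= bi1 L3.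
  rewrite -D /hmono (prod_split (fun j => hsym n j (b j)) hiN) /=.
  have bi : b i = 0%N by rewrite /b eqxx.
  by rewrite bi hsym0 mul1r L1 L2 mulrC.
Qed.
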